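(* (1) If $q$ is even, then $\mathrm{Pr}(\mathrm{Fig}(T))=m_T$. (2) If $q$ is odd, then $\mathrm{Pr}(\mathrm{Fig}(T))=\{T^\phi,T^{\phi^2}\}\cup\mathcal S_{-1}\cup\bigcup\{\mathcal S_\theta:\theta\in\mathbb{F}_{q^3}^*,\ N(\theta)\text{ a nonzero square in }\mathbb{F}_q\}$. Further $|\mathrm{Pr}(\mathrm{Fig}(T))|$ equals $2+\frac{q-1}{2}(q^2+q+1)$ if $q\equiv1\pmod 4$ and $2+\frac{q+1}{2}(q^2+q+1)$ if $q\equiv3\pmod4$.
   Context: Let $q$ be a prime power, $\mathbb{F}_{q^3}^*=\mathbb{F}_{q^3}\setminus\{0\}$, $N(x)=x^{q^2+q+1}$. Points of $\mathrm{PG}(2,q^3)$ have homogeneous coordinates $(x,y,z)$ and lines $[a,b,c]$. Let $\phi$ be the collineation $(x,y,z)\mapsto(z^q,x^q,y^q)$ (on lines $[d,e,f]\mapsto[f^q,d^q,e^q]$). A point has Type II (resp. III) if its $\phi$-orbit is three collinear (resp. non-collinear) points; a line has Type III if its $\phi$-orbit is three non-concurrent lines. For a Type III point $X$, the Fig-block is $\mathrm{Fig}(X)=\mathcal E_X\cup\mathcal F_X$, where $\mathcal E_X$ is the set of Type II points on the line $X^\phi X^{\phi^2}$ and $\mathcal F_X=\{\ell^\phi\cap\ell^{\phi^2}:\ell\text{ a Type III line through }X\}$. Let $T=(0,0,1)$ (a Type III point), $T^\phi=(1,0,0)$, $T^{\phi^2}=(0,1,0)$, and $m_T=T^\phi T^{\phi^2}$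 the line $[0,0,1]$. For a point $P\neq T$, $\mathrm{Pr}(P)=TP\cap m_T$, and for a set of points not containing $T$, $\mathrm{Pr}$ is applied elementwise. For $\theta\in\mathbb{F}_{q^3}^*$, $\mathcal S_\theta=\{(x\theta,x^q,0):x\in\mathbb{F}_{q^3}^*\}$. *)

(* Defs.v *)
From HB Require Import structures.
From mathcomp Require Import all_boot all_order all_algebra all_field.
Set Implicit Arguments. Unset Strict Implicit. Unset Printing Implicit Defensive.
Import GRing.Theory.
Local Open Scope ring_scope.

(* PG(2, F) with F = F_{q^3}.  A projective point (or line) is represented as
   the set of all nonzero scalar multiples of a nonzero vector of F^3.
   Points and lines are both such classes; incidence is the usual
   x a + y b + z c = 0. *)
Section PG.
Variables (F : finFieldType) (q : nat).

Definition vec := (F * F * F)%type.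
Definition v0 (v : vec) : F := v.1.1.
Definition v1 (v : vec) : F := v.1.2.
Definition v2 (v : vec) : F := v.2.
Definition vscale (c : F) (v : vec) : vec := (c * v0 v, c * v1 v, c * v2 v).
Definition vnz (v : vec) : bool := v != (0, 0, 0).

Definition pclass (v : vec) : {set vec} :=
  [set w | vnz w && [exists c : F, w == vscale c v]].

Definition points : {set {set vec}} := [set pclass v | v in [set v | vnz v]].
Definition lines : {set {set vec}} := points.

Definition dotv (v l : vec) : F := v0 v * v0 l + v1 v * v1 l + v2 v * v2 l.

Definition inc (P L : {set vec}) : bool :=
  [exists v in P, exists l in L, dotv v l == 0].

Definition phiv (v : vec) : vec := (v2 v ^+ q, v0 v ^+ q, v1 v ^+ q).
Definition phiS (P : {set vec}) : {set vec} := [set phiv w | w in P].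

Definition collinear (P Q R : {set vec}) : bool :=
  [exists L in lines, [&& inc P L, inc Q L & inc R L]].
Definition concurrent (L M N : {set vec}) : bool :=
  [exists P in points, [&& inc P L, inc P M & inc P N]].

Definition typeII (P : {set vec}) : bool :=
  [&& P \in points, P != phiS P & collinear P (phiS P) (phiS (phiS P))].
Definition typeIII (P : {set vec}) : bool :=
  [&& P \in points, P != phiS P & ~~ collinear P (phiS P) (phiS (phiS P))].
Definition typeIIIline (L : {set vec}) : bool :=
  [&& L \in lines, L != phiS L & ~~ concurrent L (phiS L) (phiS (phiS L))].

Definition Eset (X : {set vec}) : {set {set vec}} :=
  [set P in points | typeII P &&
     [exists L in lines, [&& inc (phiS X) L, inc (phiS (phiS X)) L & inc P L]]].
Definition Fset (X : {set vec}) : {set {set vec}} :=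
  [set P in points |
     [exists L in lines, [&& typeIIIline L, inc X L, inc P (phiS L)
                            & inc P (phiS (phiS L))]]].
Definition Fig (X : {set vec}) : {set {set vec}} := Eset X :|: Fset X.

Definition T : {set vec} := pclass (0, 0, 1).
Definition mT : {set vec} := pclass (0, 0, 1).

Definition Pr (S : {set {set vec}}) : {set {set vec}} :=
  [set Q in points | inc Q mT &&
     [exists P in S, (P != T) &&
        [exists L in lines, [&& inc T L, inc P L & inc Q L]]]].

Definition Nrm (x : F) : F := x ^+ (q ^ 2 + q + 1).

Definition Stheta (th : F) : {set {set vec}} :=
  [set pclass (x * th, x ^+ q, 0) | x in [set x : F | x != 0]].

Definition nzsqFq (a : F) : bool :=
  [exists s : F, [&& s ^+ q == s, s != 0 & a == s ^+ 2]].

Definition bigS : {set {set vec}} :=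
  \bigcup_(th : F | (th != 0) && nzsqFq (Nrm th)) Stheta th.

End PG.

(* Main.v *)
Require Import Defs.
From HB Require Import structures.
From mathcomp Require Import all_boot all_order all_algebra all_field.
From mathcomp Require Import ring zify.
Set Implicit Arguments. Unset Strict Implicit. Unset Printing Implicit Defensive.
Import GRing.Theory.
Local Open Scope ring_scope.

Section Basics.
Variable F : finFieldType.

Lemma vnzE (a b c : F) : vnz (a, b, c) = [|| a != 0, b != 0 | c != 0].
Proof. by rewrite /vnz !xpair_eqE !negb_and orbA. Qed.

Lemma vscaleE (c a b d : F) : vscale c (a, b, d) = (c * a, c * b, c * d).
Proof. by []. Qed.

Lemma dotvE (a b c d e f : F) : dotv (a, b, c) (d, e, f) = a * d + b * e + c * f.
Proof. by []. Qed.

Lemma pclassP (v w : vec F) :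
  reflect (vnz w /\ exists c, w = vscale c v) (w \in pclass v).
Proof.
rewrite inE; apply: (iffP andP) => [[-> /existsP[c /eqP ->]]|[-> [c ->]]].
  by split => //; exists c.
by split => //; apply/existsP; exists c.
Qed.

Lemma vscaleA (c d : F) v : vscale c (vscale d v) = vscale (c * d) v.
Proof. by case: v => [[a b] e]; rewrite !vscaleE !mulrA. Qed.

Lemma vscale1 (v : vec F) : vscale 1 v = v.
Proof. by case: v => [[a b] e]; rewrite !vscaleE !mul1r. Qed.

Lemma vnz_scale (c : F) v : vnz (vscale c v) = (c != 0) && vnz v.
Proof.
case: v => [[a b] e]; rewrite vscaleE !vnzE !mulf_eq0 !negb_or.
by case: (c == 0).
Qed.

Lemma pclass_self (v : vec F) : vnz v -> v \in pclass v.
Proof. by move=> nz; apply/pclassP; split => //; exists 1; rewrite vscale1. Qed.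

Lemma pclass_scale (c : F) v : c != 0 -> pclass (vscale c v) = pclass v.
Proof.
move=> c0; apply/setP => w; apply/pclassP/pclassP => -[nz [d Ew]]; split => //.
  by exists (d * c); rewrite Ew vscaleA.
by exists (d / c); rewrite Ew vscaleA divfK.
Qed.

Lemma pclass_inv (v w : vec F) : vnz v -> pclass v = pclass w ->
  exists2 c, c != 0 & v = vscale c w.
Proof.
move=> nz E; have := pclass_self nz; rewrite E => /pclassP[_ [c Ec]].
by exists c => //; move: nz; rewrite Ec vnz_scale => /andP[].
Qed.

Lemma dotv_scale (c d : F) v l : dotv (vscale c v) (vscale d l) = c * d * dotv v l.
Proof. by case: v => [[a b] e]; case: l => [[a' b'] e']; rewrite /dotv /vscale /v0 /v1 /v2 /=; ring. Qed.

Lemma incE (v l : vec F) : vnz v -> vnz l ->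
  inc (pclass v) (pclass l) = (dotv v l == 0).
Proof.
move=> nv nl; apply/existsP/idP => [[v' /andP[/pclassP[nv' [c Ev]]]]|].
  case/existsP => l' /andP[/pclassP[nl' [d El]]].
  move: nv' nl'; rewrite Ev El dotv_scale !mulf_eq0 !vnz_scale.
  by case/andP => /negbTE -> _ /andP[/negbTE -> _].
move=> H; exists v; rewrite pclass_self //=; apply/existsP; exists l.
by rewrite pclass_self.
Qed.

Lemma pointsP (P : {set vec F}) :
  reflect (exists2 v, vnz v & P = pclass v) (P \in points F).
Proof.
apply: (iffP imsetP) => [[v]|[v nv ->]]; first by rewrite inE => nv ->; exists v.
by exists v; rewrite ?inE.
Qed.

Lemma pclass_points (v : vec F) : vnz v -> pclass v \in points F.
Proof. by move=> nv; apply/pointsP; exists v. Qed.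

Lemma dotvC (v l : vec F) : dotv v l = dotv l v.
Proof. by case: v => [[a b] e]; case: l => [[a' b'] e']; rewrite /dotv /=; ring. Qed.

Definition det3 (u v w : vec F) : F :=
  v0 u * (v1 v * v2 w - v2 v * v1 w) - v1 u * (v0 v * v2 w - v2 v * v0 w)
  + v2 u * (v0 v * v1 w - v1 v * v0 w).

Lemma det_kill (u v w l : vec F) : dotv u l = 0 -> dotv v l = 0 -> dotv w l = 0 ->
  det3 u v w != 0 -> l = (0, 0, 0).
Proof.
case: u => [[u0 u1] u2]; case: v => [[x0 x1] x2]; case: w => [[w0 w1] w2].
case: l => [[l0 l1] l2]; rewrite /dotv /det3 /= => H1 H2 H3 D.
have E0 : (u0 * (x1 * w2 - x2 * w1) - u1 * (x0 * w2 - x2 * w0) + u2 * (x0 * w1 - x1 * w0)) * l0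
   = (u0 * l0 + u1 * l1 + u2 * l2) * (x1 * w2 - x2 * w1) + (x0 * l0 + x1 * l1 + x2 * l2) * (w1 * u2 - w2 * u1)
     + (w0 * l0 + w1 * l1 + w2 * l2) * (u1 * x2 - u2 * x1) by ring.
have E1 : (u0 * (x1 * w2 - x2 * w1) - u1 * (x0 * w2 - x2 * w0) + u2 * (x0 * w1 - x1 * w0)) * l1
   = (u0 * l0 + u1 * l1 + u2 * l2) * (x2 * w0 - x0 * w2) + (x0 * l0 + x1 * l1 + x2 * l2) * (w2 * u0 - w0 * u2)
     + (w0 * l0 + w1 * l1 + w2 * l2) * (u2 * x0 - u0 * x2) by ring.
have E2 : (u0 * (x1 * w2 - x2 * w1) - u1 * (x0 * w2 - x2 * w0) + u2 * (x0 * w1 - x1 * w0)) * l2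
   = (u0 * l0 + u1 * l1 + u2 * l2) * (x0 * w1 - x1 * w0) + (x0 * l0 + x1 * l1 + x2 * l2) * (w0 * u1 - w1 * u0)
     + (w0 * l0 + w1 * l1 + w2 * l2) * (u0 * x1 - u1 * x0) by ring.
rewrite H1 H2 H3 !mul0r !addr0 in E0 E1 E2.
move: E0 E1 E2 => /eqP; rewrite mulf_eq0 (negbTE D) /= => /eqP ->.
move=> /eqP; rewrite mulf_eq0 (negbTE D) /= => /eqP ->.
move=> /eqP; rewrite mulf_eq0 (negbTE D) /= => /eqP -> //.
Qed.


Lemma card_part (T T' : finType) (A : {set T}) (B : {set T'}) (f : T -> T') :
  (forall x, x \in A -> f x \in B) ->
  #|A| = (\sum_(c in B) #|[set x in A | f x == c]|)%N.
Proof.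
move=> fAB; rewrite -sum1_card (partition_big f (mem B)) //=.
apply: eq_bigr => c _; rewrite -sum1_card; apply: eq_bigl => x.
by rewrite !inE.
Qed.

Lemma sum_eq_max (T : finType) (B : {set T}) (g : T -> nat) (n : nat) :
  (forall c, c \in B -> g c <= n)%N ->
  (#|B| * n <= \sum_(c in B) g c)%N ->
  forall c, c \in B -> g c = n.
Proof.
move=> gle hsum.
have E : (\sum_(c in B) (n - g c) + \sum_(c in B) g c = \sum_(c in B) n)%N.
  rewrite -big_split /=; apply: eq_bigr => c cB; rewrite subnK //; exact: gle.
rewrite sum_nat_const in E.
have Z : (\sum_(c in B) (n - g c) = 0)%N.
  by move: E hsum; lia.
move=> c cB; apply/eqP; rewrite eqn_leq gle //=.
move/eqP: Z; rewrite sum_nat_eq0 => /forallP/(_ c); rewrite cB /=.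
by rewrite subn_eq0.
Qed.

End Basics.

Section Frob.
Variables (F : finFieldType) (q : nat).
Hypothesis q_gt0 : (0 < q)%N.
Hypothesis HF3 : forall x : F, x ^+ q ^+ q ^+ q = x.

Lemma fr_eq0 (x : F) : (x ^+ q == 0) = (x == 0).
Proof. by rewrite expf_eq0 q_gt0. Qed.

Lemma fr0 : (0 : F) ^+ q = 0.
Proof. by rewrite expr0n eqn0Ngt q_gt0. Qed.

Lemma phivE (a b c : F) : phiv q (a, b, c) = (c ^+ q, a ^+ q, b ^+ q).
Proof. by []. Qed.

Lemma phiv_scale (c : F) v : phiv q (vscale c v) = vscale (c ^+ q) (phiv q v).
Proof. by case: v => [[a b] e]; rewrite vscaleE !phivE vscaleE !exprMn. Qed.

Lemma vnz_phiv (v : vec F) : vnz (phiv q v) = vnz v.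
Proof. by case: v => [[a b] e]; rewrite phivE !vnzE !fr_eq0 orbC orbA. Qed.

Lemma phiS_pclass (v : vec F) : phiS q (pclass v) = pclass (phiv q v).
Proof.
apply/setP => w; apply/imsetP/pclassP => [[w' /pclassP[nw' [c Ew']] ->]|[nw [c Ew]]].
  by rewrite vnz_phiv; split => //; exists (c ^+ q); rewrite Ew' phiv_scale.
exists (vscale (c ^+ q ^+ q) v); last by rewrite phiv_scale HF3.
apply/pclassP; split; last by exists (c ^+ q ^+ q).
by rewrite -vnz_phiv phiv_scale HF3 -Ew.
Qed.

Definition sig (x : F) := x ^+ q * x ^+ q ^+ q.

Lemma NrmE (x : F) : Nrm q x = x * x ^+ q * x ^+ q ^+ q.
Proof.
rewrite /Nrm -exprM mulnn !exprD expr1; ring.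
Qed.

Lemma Nfix (x : F) : Nrm q x ^+ q = Nrm q x.
Proof. by rewrite !NrmE !exprMn HF3; ring. Qed.

Lemma NM (x y : F) : Nrm q (x * y) = Nrm q x * Nrm q y.
Proof. by rewrite /Nrm exprMn. Qed.

Lemma N_eq0 (x : F) : (Nrm q x == 0) = (x == 0).
Proof. by rewrite /Nrm expf_eq0 addn1. Qed.

Lemma N1 : Nrm q (1 : F) = 1.
Proof. by rewrite /Nrm expr1n. Qed.

Lemma N0 : Nrm q (0 : F) = 0.
Proof. by rewrite /Nrm expr0n addn1. Qed.

Lemma NV (x : F) : Nrm q x^-1 = (Nrm q x)^-1.
Proof. by rewrite /Nrm exprVn. Qed.

Lemma sigE (x : F) : x * sig x = Nrm q x.
Proof. by rewrite NrmE /sig mulrA. Qed.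

Lemma N_fr (x : F) : Nrm q (x ^+ q) = Nrm q x.
Proof. by rewrite /Nrm exprAC Nfix. Qed.

Lemma Nsig (x : F) : Nrm q (sig x) = Nrm q x ^+ 2.
Proof. by rewrite /sig NM !N_fr expr2. Qed.

Lemma Nfixpt (u : F) : u ^+ q = u -> Nrm q u = u ^+ 3.
Proof. by move=> H; rewrite NrmE !H; ring. Qed.

Lemma sig_eq0 (x : F) : (sig x == 0) = (x == 0).
Proof. by rewrite /sig mulf_eq0 !fr_eq0 orbb. Qed.



Lemma vnz001 : vnz ((0, 0, 1) : vec F).
Proof. by rewrite vnzE oner_eq0 !eqxx. Qed.

Lemma inc_T (l : vec F) : vnz l -> inc (T F) (pclass l) = (v2 l == 0).
Proof.
move=> nl; rewrite /T incE ?vnz001 //; case: l {nl} => [[a b] c].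
by rewrite dotvE !mul0r mul1r !add0r.
Qed.

Lemma inc_mT (v : vec F) : vnz v -> inc (pclass v) (mT F) = (v2 v == 0).
Proof. by move=> nv; rewrite /mT incE ?vnz001 // dotvC -inc_T ?incE ?vnz001. Qed.

Lemma PrP (S : {set {set vec F}}) Q : {subset S <= points F} ->
  Q \in Pr S <-> exists (x y : F) (p : vec F), [/\ (x != 0) || (y != 0),
     Q = pclass (x, y, 0), vnz p, pclass p \in S &
     ((v0 p != 0) || (v1 p != 0)) && (x * v1 p == y * v0 p)].
Proof.
move=> Spts; split.
  rewrite inE => /andP[/pointsP[w nw ->]] /andP[]; rewrite inc_mT //.
  case: w nw => [[x y] z] nw /= /eqP z0; subst z.
  case/existsP => P /andP[PS /andP[PT /existsP[L /andP[Lpts]]]].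
  have /pointsP[p np Pp] := Spts _ PS; subst P.
  have /pointsP[l nl Ll] := Lpts; subst L.
  rewrite inc_T // !incE //; case/and3P => l2 H1 H2.
  exists x, y, p; split => //; first by move: nw; rewrite vnzE eqxx orbF.
  case: p np PT PS H1 => [[p0 p1] p2] np PT PS H1.
  case: l nl Lpts l2 H1 H2 => [[l0 l1] l2] nl _ /= /eqP l20; subst l2.
  rewrite !dotvE !mulr0 !addr0 /= => /eqP H1 /eqP H2.
  rewrite /v0 /v1 /=; apply/andP; split.
    rewrite -negb_and; apply: contra PT => /andP[/eqP e0 /eqP e1]; apply/eqP.
    subst p0 p1; move: np; rewrite vnzE !eqxx /= => np.
    have -> : ((0, 0, p2) : vec F) = vscale p2 (0, 0, 1) by rewrite vscaleE !mulr0 mulr1.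
    by rewrite pclass_scale.
  have E0 : (x * p1 - y * p0) * l0 = p1 * (x * l0 + y * l1) - y * (p0 * l0 + p1 * l1) by ring.
  have E1 : (x * p1 - y * p0) * l1 = x * (p0 * l0 + p1 * l1) - p0 * (x * l0 + y * l1) by ring.
  rewrite H1 H2 !mulr0 subr0 in E0 E1.
  move: nl; rewrite vnzE eqxx orbF => nl; rewrite -subr_eq0; apply/eqP.
  case/orP: nl => [n0|n1]; [apply: (mulIf n0) | apply: (mulIf n1)]; by rewrite mul0r ?E0 ?E1.
case=> x [y [p [nxy -> np pS /andP[npT /eqP exy]]]].
have nxy0 : vnz ((x, y, 0) : vec F) by rewrite vnzE eqxx orbF.
rewrite inE pclass_points //= inc_mT //= eqxx /=.
apply/existsP; exists (pclass p); rewrite pS /=; apply/andP; split.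
  apply/eqP => /(pclass_inv np) [c _]; case: p np npT exy pS => [[p0 p1] p2] /=.
  move=> _ H _ _; rewrite vscaleE !mulr0 => -[e0 e1 _]; move: H.
  by rewrite /v0 /v1 /= e0 e1 eqxx.
case: p np npT exy pS => [[p0 p1] p2] np /= npT exy pS.
have nl : vnz ((p1, - p0, 0) : vec F) by rewrite vnzE oppr_eq0 eqxx orbF orbC.
apply/existsP; exists (pclass (p1, - p0, 0)); rewrite pclass_points //=.
rewrite inc_T //= eqxx /= !incE // !dotvE.
apply/andP; split; apply/eqP; first by ring.
rewrite /v0 /v1 /= in exy *.
by rewrite mulr0 addr0 mulrN exy subrr.
Qed.


Ltac vnz_tac H := rewrite ?vnzE ?fr_eq0 ?eqxx /=; case/orP: H => ->; rewrite ?orbT.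

Lemma phiS_T : phiS q (T F) = pclass (1, 0, 0).
Proof. by rewrite /T phiS_pclass phivE expr1n fr0. Qed.

Lemma phiS2_T : phiS q (phiS q (T F)) = pclass (0, 1, 0).
Proof. by rewrite phiS_T phiS_pclass phivE expr1n fr0. Qed.

Lemma vnz3 (a b c : F) : (a != 0) || (b != 0) || (c != 0) -> vnz (a, b, c).
Proof. by rewrite vnzE orbA. Qed.

Lemma vnz100 : vnz ((1, 0, 0) : vec F).
Proof. by rewrite vnzE oner_eq0. Qed.
Lemma vnz010 : vnz ((0, 1, 0) : vec F).
Proof. by rewrite vnzE oner_eq0 eqxx. Qed.

Lemma EsetP (p : vec F) : vnz p -> pclass p \in Eset q (T F) ->
  v2 p = 0 /\ Nrm q (v0 p) + Nrm q (v1 p) = 0.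
Proof.
case: p => [[p0 p1] p2] np; rewrite inE => /andP[_ /andP[tII]].
case/existsP => L /andP[/pointsP[l nl ->]]; rewrite phiS2_T phiS_T.
rewrite !incE ?vnz100 ?vnz010 //.
case: l nl => [[l0 l1] l2] nl; rewrite !dotvE !mul1r !mul0r !addr0 !add0r.
case/and3P => /eqP e0 /eqP e1 /eqP e2; subst l0 l1.
move: nl; rewrite vnzE !eqxx /= => nl2.
have p20 : p2 = 0.
  by move/eqP: e2; rewrite !mulr0 !add0r mulf_eq0 (negbTE nl2) orbF => /eqP.
subst p2; split => //; rewrite /v0 /v1 /=.
move: tII; rewrite /typeII /collinear !phiS_pclass !phivE !fr0.
case/and3P => _ _ /existsP[L' /andP[/pointsP[l' nl' ->]]].
have nu : vnz ((p0, p1, 0) : vec F) by [].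
have np' : (p0 != 0) || (p1 != 0) by move: np; rewrite vnzE eqxx orbF.
have nv : vnz ((0, p0 ^+ q, p1 ^+ q) : vec F).
  by vnz_tac np'.
have nw : vnz ((p1 ^+ q ^+ q, 0, p0 ^+ q ^+ q) : vec F).
  by vnz_tac np'.
rewrite !incE // => /and3P[/eqP d1 /eqP d2 /eqP d3].
have D : det3 (p0, p1, 0) (0, p0 ^+ q, p1 ^+ q) (p1 ^+ q ^+ q, 0, p0 ^+ q ^+ q)
   = Nrm q p0 + Nrm q p1.
  by rewrite /det3 /v0 /v1 /v2 /= !NrmE; ring.
apply/eqP; apply: contraT => nD; move: nl'.
by rewrite (det_kill d1 d2 d3) ?D // vnzE eqxx.
Qed.

Lemma Eset_mem (x y : F) : (x != 0) || (y != 0) -> Nrm q x + Nrm q y = 0 ->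
  pclass (x, y, 0) \in Eset q (T F).
Proof.
move=> nxy HN.
have nu : vnz ((x, y, 0) : vec F) by rewrite vnzE eqxx orbF.
rewrite inE pclass_points //= /typeII pclass_points //= /collinear.
rewrite phiS2_T phiS_T !phiS_pclass !phivE !fr0; apply/andP; split; last first.
  apply/existsP; exists (pclass (0, 0, 1)); rewrite pclass_points ?vnz001 //=.
  rewrite !incE ?vnz001 ?vnz100 ?vnz010 // !dotvE.
  by apply/and3P; split; apply/eqP; ring.
apply/andP; split.
  apply/eqP => /(pclass_inv nu) [c _]; rewrite vscaleE mulr0 => -[ex ey _].
  by move: nxy; rewrite ey ex fr0 mulr0 eqxx.
have nl : vnz ((y * y ^+ q, - (x * y ^+ q), x * x ^+ q) : vec F).
  apply: vnz3; case/orP: nxy => [nx|ny].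
    have -> : x * x ^+ q != 0 by rewrite mulf_neq0 // fr_eq0.
    by rewrite orbT.
  have -> : y * y ^+ q != 0 by rewrite mulf_neq0 // fr_eq0.
  by [].
have nv : vnz ((0, x ^+ q, y ^+ q) : vec F).
  by vnz_tac nxy.
have nw : vnz ((y ^+ q ^+ q, 0, x ^+ q ^+ q) : vec F).
  by vnz_tac nxy.
apply/existsP; exists (pclass (y * y ^+ q, - (x * y ^+ q), x * x ^+ q)).
rewrite pclass_points //= !incE // !dotvE; apply/and3P; split; apply/eqP; try ring.
by rewrite mul0r addr0 -HN !NrmE; ring.
Qed.

Definition fpt (a b : F) : vec F := (sig a, sig b, - (a ^+ q * b ^+ q ^+ q)).

Lemma FsetP (p : vec F) : vnz p -> pclass p \in Fset q (T F) ->
  exists a b, Nrm q a + Nrm q b != 0 /\ v0 p * sig b = v1 p * sig a.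
Proof.
case: p => [[p0 p1] p2] np; rewrite inE => /andP[_].
case/existsP => L /and4P[/pointsP[l nl ->]]; rewrite inc_T // => tIII.
case: l nl tIII => [[a b] c] nl tIII /= /eqP c0; subst c.
rewrite !phiS_pclass !phivE !fr0.
have nab : (a != 0) || (b != 0) by move: nl; rewrite vnzE eqxx orbF.
have nv : vnz ((0, a ^+ q, b ^+ q) : vec F).
  by vnz_tac nab.
have nw : vnz ((b ^+ q ^+ q, 0, a ^+ q ^+ q) : vec F).
  by vnz_tac nab.
rewrite !incE // !dotvE => /andP[/eqP H1 /eqP H2].
exists a, b; split; last first.
  rewrite /v0 /v1 /= /sig.
  apply/eqP; rewrite -subr_eq0; apply/eqP.
  transitivity (b ^+ q * (p0 * b ^+ q ^+ q + p1 * 0 + p2 * a ^+ q ^+ q)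
     - a ^+ q ^+ q * (p0 * 0 + p1 * a ^+ q + p2 * b ^+ q)); first ring.
  by rewrite H1 H2 !mulr0 subrr.
apply/negP => /eqP HN; move: tIII; rewrite /typeIIIline /concurrent.
rewrite !phiS_pclass !phivE !fr0 => /and3P[_ _ /negP]; apply.
have npt : vnz (fpt a b).
  rewrite /fpt; apply: vnz3; case/orP: nab => [na|nb].
    by rewrite !sig_eq0 na.
  by rewrite !sig_eq0 nb orbT.
apply/existsP; exists (pclass (fpt a b)); rewrite pclass_points //= !incE //.
rewrite /fpt !dotvE /sig; apply/and3P; split; apply/eqP; try ring.
by rewrite mulr0 addr0 -HN !NrmE; ring.
Qed.

Lemma Fset_mem (a b : F) : Nrm q a + Nrm q b != 0 ->
  pclass (fpt a b) \in Fset q (T F).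
Proof.
move=> HN.
have nab : (a != 0) || (b != 0).
  by apply: contraR HN; rewrite negb_or !negbK => /andP[/eqP -> /eqP ->]; rewrite N0 addr0.
have nl : vnz ((a, b, 0) : vec F) by rewrite vnzE eqxx orbF.
have nv : vnz ((0, a ^+ q, b ^+ q) : vec F).
  by vnz_tac nab.
have nw : vnz ((b ^+ q ^+ q, 0, a ^+ q ^+ q) : vec F).
  by vnz_tac nab.
have npt : vnz (fpt a b).
  rewrite /fpt; apply: vnz3; case/orP: nab => [na|nb].
    by rewrite !sig_eq0 na.
  by rewrite !sig_eq0 nb orbT.
rewrite inE pclass_points //=; apply/existsP; exists (pclass (a, b, 0)).
rewrite pclass_points //= inc_T //= eqxx /= !phiS_pclass !phivE !fr0 !incE //.
rewrite /fpt !dotvE /sig andbC /=; apply/andP; split.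
  by apply/andP; split; apply/eqP; ring.
rewrite /typeIIIline pclass_points //= /concurrent !phiS_pclass !phivE !fr0.
apply/andP; split.
  apply/eqP => /(pclass_inv nl) [c _]; rewrite vscaleE mulr0 => -[ea eb _].
  by move: nab; rewrite eb ea fr0 mulr0 eqxx.
apply/negP => /existsP[P /and4P[/pointsP[r nr ->]]].
rewrite !incE // => /eqP d1 /eqP d2 /eqP d3.
have D : det3 (a, b, 0) (0, a ^+ q, b ^+ q) (b ^+ q ^+ q, 0, a ^+ q ^+ q)
   = Nrm q a + Nrm q b.
  by rewrite /det3 /v0 /v1 /v2 /= !NrmE; ring.
rewrite dotvC in d1; rewrite dotvC in d2; rewrite dotvC in d3.
by move: nr; rewrite (det_kill d1 d2 d3) ?D // vnzE eqxx.
Qed.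

Definition Gp (x y : F) : bool := (Nrm q x + Nrm q y == 0) ||
  [exists a, exists b, (Nrm q a + Nrm q b != 0) && (x * sig b == y * sig a)].

Lemma Fig_pts : {subset Fig q (T F) <= points F}.
Proof. by move=> P; rewrite !inE => /orP[] /andP[]. Qed.

Lemma nab_of (a b : F) : Nrm q a + Nrm q b != 0 -> (a != 0) || (b != 0).
Proof.
by move=> HN; apply: contraR HN; rewrite negb_or !negbK => /andP[/eqP -> /eqP ->]; rewrite N0 addr0.
Qed.

Lemma PrFigP Q : Q \in Pr (Fig q (T F)) <->
  exists x y, [/\ (x != 0) || (y != 0), Q = pclass (x, y, 0) & Gp x y].
Proof.
rewrite PrP; last exact: Fig_pts.
split.
  case=> x [y [p [nxy -> np]]]; rewrite inE => /orP[pE|pF].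
    case: p np pE => [[p0 p1] p2] np pE; rewrite /v0 /v1 /=.
    case/andP => nP /eqP exy; exists x, y; split => //; apply/orP; left.
    have [_ HN] := EsetP np pE; rewrite /v0 /v1 /= in HN.
    have p0n : p0 != 0.
      apply: contraTneq nP => p00; rewrite p00 eqxx /= negbK.
      by move: HN; rewrite p00 N0 add0r => /eqP; rewrite N_eq0.
    have := congr1 (Nrm q) exy; rewrite !NM => E.
    have HN' : Nrm q p1 = - Nrm q p0 by apply/eqP; rewrite -addr_eq0 addrC HN.
    rewrite HN' in E.
    have : (Nrm q x + Nrm q y) * Nrm q p0 = 0.
      by rewrite mulrDl -E; ring.
    by move/eqP; rewrite mulf_eq0 N_eq0 (negbTE p0n) orbF.
  have [a [b [HN E]]] := FsetP np pF.
  case: p np pF E => [[p0 p1] p2] np pF; rewrite /v0 /v1 /= => E.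
  case/andP => nP /eqP exy; exists x, y; split => //; apply/orP; right.
  apply/existsP; exists a; apply/existsP; exists b; rewrite HN /=.
  rewrite -subr_eq0; apply/eqP.
  case/orP: nP => [n0|n1].
    apply: (mulIf n0); rewrite mul0r.
    transitivity (x * (p0 * sig b) - (y * p0) * sig a); first ring.
    by rewrite E -exy; ring.
  apply: (mulIf n1); rewrite mul0r.
  transitivity ((x * p1) * sig b - y * (p1 * sig a)); first ring.
  by rewrite exy -E; ring.
case=> x [y [nxy -> /orP[HN|]]].
  exists x, y, (x, y, 0); split => //; first by rewrite vnzE eqxx orbF.
    by rewrite inE Eset_mem //; apply/eqP.
  by rewrite /v0 /v1 /= nxy mulrC eqxx.
case/existsP => a /existsP[b /andP[HN /eqP E]].
have nab := nab_of HN.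
exists x, y, (fpt a b); split => //.
- rewrite /fpt vnz3 //; case/orP: nab => [na|nb]; first by rewrite !sig_eq0 na.
  by rewrite !sig_eq0 nb orbT.
- by rewrite inE Fset_mem ?orbT.
rewrite /fpt /v0 /v1 /= E eqxx andbT.
by case/orP: nab => [na|nb]; rewrite !sig_eq0 ?na ?nb ?orbT.
Qed.

Definition good (s : F) : bool :=
  (Nrm q s == -1) || [exists t, (Nrm q t != -1) && (sig t == s)].

Lemma sigM (x y : F) : sig (x * y) = sig x * sig y.
Proof. by rewrite /sig !exprMn; ring. Qed.

Lemma sigV (x : F) : sig x^-1 = (sig x)^-1.
Proof. by rewrite /sig !exprVn invfM. Qed.

Lemma sig1 : sig 1 = 1.
Proof. by rewrite /sig !expr1n mulr1. Qed.

Lemma sig0 : sig 0 = 0.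
Proof. by rewrite /sig !fr0 mulr0. Qed.

Lemma NDiv (x y : F) : Nrm q (x / y) = Nrm q x / Nrm q y.
Proof. by rewrite NM NV. Qed.

Lemma Gp_canon (x y : F) : x != 0 -> Gp x y = good (y / x).
Proof.
move=> x0; have Nx0 : Nrm q x != 0 by rewrite N_eq0.
apply/orP/orP => [[HN|]|[HN|]].
- left; rewrite NDiv; move/eqP: HN => HN.
  have -> : Nrm q y = - Nrm q x by apply/eqP; rewrite -addr_eq0 addrC HN.
  by rewrite mulNr divff.
- case/existsP => a /existsP[b /andP[HN /eqP E]]; right.
  have a0 : a != 0.
    apply: contraNneq HN => a0; move: E; rewrite a0 sig0 mulr0 => /eqP.
    by rewrite mulf_eq0 (negbTE x0) sig_eq0 => /eqP ->; rewrite N0 addr0.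
  have sa0 : sig a != 0 by rewrite sig_eq0.
  have Na0 : Nrm q a != 0 by rewrite N_eq0.
  apply/existsP; exists (b / a); apply/andP; split.
    rewrite NDiv; apply: contra HN => /eqP H.
    have -> : Nrm q b = - Nrm q a by rewrite -[Nrm q b](divfK Na0) H mulN1r.
    by rewrite subrr.
  rewrite sigM sigV; apply/eqP.
  apply: (mulIf sa0); rewrite divfK //; apply: (mulfI x0); rewrite E.
  by field.
- left; move: HN; rewrite NDiv => /eqP HN.
  have : Nrm q y = - Nrm q x by rewrite -[Nrm q y](divfK Nx0) HN mulN1r.
  by move=> ->; rewrite subrr.
case/existsP => t /andP[Ht /eqP E]; right.
apply/existsP; exists 1; apply/existsP; exists t; rewrite N1 sig1 mulr1 E.
rewrite mulrC divfK // eqxx andbT.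
by apply: contra Ht; rewrite addrC addr_eq0.
Qed.

Lemma Gp10 : Gp 1 0.
Proof.
apply/orP; right; apply/existsP; exists 1; apply/existsP; exists 0.
by rewrite N1 N0 addr0 oner_eq0 sig0 sig1 mulr0 mul0r eqxx.
Qed.

Lemma Gp01 : Gp 0 1.
Proof.
apply/orP; right; apply/existsP; exists 0; apply/existsP; exists 1.
by rewrite N1 N0 add0r oner_eq0 sig0 sig1 mulr0 mul0r eqxx.
Qed.

Lemma PrFig_canon Q : Q \in Pr (Fig q (T F)) <->
  [\/ Q = pclass (1, 0, 0), Q = pclass (0, 1, 0) |
      exists2 s, (s != 0) && good s & Q = pclass (1, s, 0)].
Proof.
rewrite PrFigP; split.
  case=> x [y [nxy -> G]].
  have [x0|x0] := eqVneq x 0.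
    subst x; move: nxy; rewrite eqxx /= => y0; apply: Or32.
    have -> : ((0, y, 0) : vec F) = vscale y (0, 1, 0) by rewrite vscaleE !mulr0 mulr1.
    by rewrite pclass_scale.
  have [y0|y0] := eqVneq y 0.
    subst y; apply: Or31.
    have -> : ((x, 0, 0) : vec F) = vscale x (1, 0, 0) by rewrite vscaleE !mulr0 mulr1.
    by rewrite pclass_scale.
  apply: Or33; exists (y / x).
    by rewrite -Gp_canon // G mulf_neq0 // invr_eq0.
  have -> : ((x, y, 0) : vec F) = vscale x (1, y / x, 0).
    by rewrite vscaleE mulr1 mulr0 mulrC divfK.
  by rewrite pclass_scale.
case=> [->|->|[s /andP[s0 G] ->]].
- by exists 1, 0; rewrite oner_eq0 Gp10.
- by exists 0, 1; rewrite oner_eq0 Gp01 orbT.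
by exists 1, s; rewrite oner_eq0 Gp_canon ?oner_eq0 // divr1.
Qed.

Lemma sqrt_witness (u s : F) : u ^+ q = u -> u != 0 -> s != 0 ->
  Nrm q s = u ^+ 2 -> Nrm q (u / s) = u /\ sig (u / s) = s.
Proof.
move=> uq u0 s0 Ns.
have Nt : Nrm q (u / s) = u by rewrite NDiv Nfixpt // Ns; field.
split => //.
have t0 : u / s != 0 by rewrite mulf_neq0 ?invr_eq0.
apply: (mulfI t0); rewrite sigE Nt; field.
done.
Qed.


Hypothesis HD : forall x y : F, (x + y) ^+ q = x ^+ q + y ^+ q.
Hypothesis q_gt1 : (1 < q)%N.
Hypothesis cardF : #|F| = (q ^ 3)%N.

Lemma card_roots_lt (p : {poly F}) : p != 0 -> (#|[set x | root p x]| < size p)%N.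
Proof.
move=> p0; rewrite cardE; apply: max_poly_roots => //; last exact: enum_uniq.
by apply/allP => x; rewrite mem_enum inE.
Qed.

Lemma hilbert90 (w : F) : Nrm q w = 1 -> exists2 z, z != 0 & z = w * z ^+ q.
Proof.
move=> Nw.
pose P : {poly F} := 'X + w *: 'X^q + (w * w ^+ q) *: 'X^(q * q).
have P1 : P`_1 = 1.
  rewrite /P !coefD !coefZ !coefXn coefX /=.
  have -> : (1 == q)%N = false by apply/eqP; lia.
  have -> : (1 == q * q)%N = false by apply/eqP; nia.
  by rewrite !mulr0 !addr0.
have P0 : P != 0 by apply: contra_neq (@oner_neq0 F) => P0; rewrite -P1 P0 coef0.
have sP : (size P <= (q * q).+1)%N.
  have qq : (q <= q * q)%N by nia.
  rewrite /P; apply: (leq_trans (size_add _ _)); rewrite geq_max; apply/andP; split.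
    apply: (leq_trans (size_add _ _)); rewrite geq_max; apply/andP; split.
      by rewrite size_polyX; nia.
    by apply: (leq_trans (size_scale_leq _ _)); rewrite size_polyXn.
  by apply: (leq_trans (size_scale_leq _ _)); rewrite size_polyXn.
have [c Hc] : exists c, ~~ root P c.
  case: (pickP (fun c => ~~ root P c)) => [c Hc|H]; first by exists c.
  have E : [set x | root P x] = setT.
    by apply/setP => x; rewrite !inE; move: (H x); case: (root P x).
  have := card_roots_lt P0; rewrite E cardsT cardF => lt.
  have : (q ^ 3 < (q * q).+1)%N by apply: leq_trans lt sP.
  have -> : (q ^ 3 = q * q * q)%N by rewrite !expnS expn0 muln1 mulnA.
  nia.
exists (P.[c]); first exact: Hc.
rewrite /P !hornerE !exprM !HD !exprMn HF3.
rewrite NrmE in Nw.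
transitivity (c * (w * w ^+ q * w ^+ q ^+ q) + w * c ^+ q + w * w ^+ q * c ^+ q ^+ q).
  by rewrite Nw mulr1.
ring.
Qed.


Lemma SthetaP (th : F) (Q : {set vec F}) : th != 0 -> Q \in Stheta q th <->
  exists2 s, (s != 0) && (Nrm q s * Nrm q th == 1) & Q = pclass (1, s, 0).
Proof.
move=> th0; split.
  case/imsetP => x; rewrite inE => x0 ->.
  have xth : x * th != 0 by rewrite mulf_neq0.
  exists (x ^+ q / (x * th)).
    rewrite mulf_neq0 ?invr_eq0 ?fr_eq0 //= NDiv N_fr NM; apply/eqP; field.
    by rewrite !N_eq0 th0 x0.
  have -> : ((x * th, x ^+ q, 0) : vec F) = vscale (x * th) (1, x ^+ q / (x * th), 0).
    by rewrite vscaleE mulr1 mulr0 mulrCA divff // mulr1.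
  by rewrite pclass_scale.
case=> s /andP[s0 /eqP Ns] ->.
have Nw : Nrm q ((s * th)^-1) = 1 by rewrite NV NM Ns invr1.
have [z z0 Ez] := hilbert90 Nw.
have zq : z ^+ q = s * th * z.
  by rewrite {2}Ez mulrA divff ?mul1r // mulf_neq0.
apply/imsetP; exists z; first by rewrite inE.
have -> : ((z * th, z ^+ q, 0) : vec F) = vscale (z * th) (1, s, 0).
  by rewrite vscaleE mulr1 mulr0 zq; congr (_, _, _); ring.
by rewrite pclass_scale // mulf_neq0.
Qed.

Lemma nzsq_inv (a : F) : nzsqFq q a -> nzsqFq q a^-1.
Proof.
case/existsP => s /and3P[/eqP sq s0 /eqP ->]; apply/existsP; exists s^-1.
by rewrite exprVn sq eqxx invr_eq0 s0 exprVn eqxx.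
Qed.

Lemma bigSP (Q : {set vec F}) : Q \in bigS F q <->
  exists2 s, (s != 0) && nzsqFq q (Nrm q s) & Q = pclass (1, s, 0).
Proof.
split.
  case/bigcupP => th /andP[th0 Hth] /(SthetaP _ th0)[s /andP[s0 /eqP Ns] ->].
  exists s => //; rewrite s0 /=.
  have -> : Nrm q s = (Nrm q th)^-1.
    have Nth : Nrm q th != 0 by rewrite N_eq0.
    by apply: (mulIf Nth); rewrite Ns mulVf.
  exact: nzsq_inv.
case=> s /andP[s0 Hs] ->; apply/bigcupP; exists s^-1.
  by rewrite invr_eq0 s0 NV /= nzsq_inv.
apply/SthetaP; first by rewrite invr_eq0.
exists s => //; rewrite s0 NV /= divff ?eqxx // N_eq0; exact: s0.
Qed.

Lemma mT_canon (Q : {set vec F}) : Q \in points F -> inc Q (mT F) ->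
  [\/ Q = pclass (1, 0, 0), Q = pclass (0, 1, 0) |
      exists2 s, s != 0 & Q = pclass (1, s, 0)].
Proof.
case/pointsP => v nv ->; rewrite inc_mT //.
case: v nv => [[x y] z] nv /= /eqP z0; subst z.
have nxy : (x != 0) || (y != 0) by move: nv; rewrite vnzE eqxx orbF.
have [x0|x0] := eqVneq x 0.
  subst x; move: nxy; rewrite eqxx /= => y0; apply: Or32.
  have -> : ((0, y, 0) : vec F) = vscale y (0, 1, 0) by rewrite vscaleE !mulr0 mulr1.
  by rewrite pclass_scale.
have [y0|y0] := eqVneq y 0.
  subst y; apply: Or31.
  have -> : ((x, 0, 0) : vec F) = vscale x (1, 0, 0) by rewrite vscaleE !mulr0 mulr1.
  by rewrite pclass_scale.
apply: Or33; exists (y / x); first by rewrite mulf_neq0 // invr_eq0.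
have -> : ((x, y, 0) : vec F) = vscale x (1, y / x, 0).
  by rewrite vscaleE mulr1 mulr0 mulrC divfK.
by rewrite pclass_scale.
Qed.

Lemma Nm1_odd : odd q -> Nrm q (-1 : F) = -1.
Proof.
move=> oq; rewrite /Nrm -signr_odd !oddD oddX oq /=.
by rewrite expr1.
Qed.

Lemma good_even (s : F) : ~~ odd q -> s != 0 -> good s.
Proof.
move=> eq s0.
have m1 : (-1 : F) = 1.
  have := HF3 (-1); rewrite -signr_odd (negbTE eq) expr0 !expr1n => <-; done.
have [Hm|Hm] := eqVneq (Nrm q s) (-1); first by rewrite /good Hm eqxx.
pose u := Nrm q s ^+ q./2.
have hq : (q = q./2 * 2)%N by rewrite muln2 -{1}(odd_double_half q) (negbTE eq) add0n.
have u2 : Nrm q s = u ^+ 2 by rewrite /u -exprM -hq Nfix.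
have uq : u ^+ q = u by rewrite /u exprAC Nfix.
have u0 : u != 0 by rewrite /u expf_neq0 // N_eq0.
have [Nt St] := sqrt_witness uq u0 s0 u2.
apply/orP; right; apply/existsP; exists (u / s); rewrite Nt St eqxx andbT.
by apply: contra Hm => /eqP u1; rewrite u2 u1 sqrrN expr1n m1.
Qed.

Lemma good_odd (s : F) : (-1 : F) != 1 -> s != 0 ->
  good s = (Nrm q s == -1) || nzsqFq q (Nrm q s).
Proof.
move=> m1 s0; rewrite /good; congr (_ || _); apply/existsP/existsP.
  case=> t /andP[_ /eqP St]; exists (Nrm q t).
  have t0 : t != 0 by apply: contraNneq s0 => t0; rewrite -St t0 sig0.
  by rewrite Nfix eqxx N_eq0 t0 -St Nsig eqxx.
case=> u /and3P[/eqP uq u0 /eqP Ns].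
have [um|um] := eqVneq u (-1).
  have := @sqrt_witness 1 s (expr1n _ _) (oner_neq0 _) s0.
  rewrite Ns um expr1n sqrrN expr1n => /(_ erefl) [Nt St].
  by exists (1 / s); rewrite Nt St eqxx andbT eq_sym.
have [Nt St] := sqrt_witness uq u0 s0 Ns.
by exists (u / s); rewrite Nt St eqxx um.
Qed.


Lemma even_eq : ~~ odd q -> Pr (Fig q (T F)) = [set P in points F | inc P (mT F)].
Proof.
move=> eq; apply/setP => Q; rewrite [RHS]inE; apply/idP/idP.
  by rewrite /Pr inE => /andP[-> /andP[-> _]].
case/andP => Qp Qm; apply/PrFig_canon.
case: (mT_canon Qp Qm) => [->|->|[s s0 ->]]; [exact: Or31 | exact: Or32 |].
by apply: Or33; exists s; rewrite // s0 good_even.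
Qed.

Lemma odd_eq : odd q -> (-1 : F) != 1 ->
  Pr (Fig q (T F)) = [set pclass ((1, 0, 0) : vec F); pclass ((0, 1, 0) : vec F)]
         :|: Stheta q (-1) :|: bigS F q.
Proof.
move=> oq m1; have n1 : (-1 : F) != 0 by rewrite oppr_eq0 oner_eq0.
apply/setP => Q; apply/idP/idP.
  case/PrFig_canon => [->|->|[s /andP[s0 G] ->]].
  - by apply/setUP; left; apply/setUP; left; rewrite !inE eqxx.
  - by apply/setUP; left; apply/setUP; left; rewrite !inE eqxx orbT.
  rewrite good_odd // in G; case/orP: G => [Hm|Hsq].
    apply/setUP; left; apply/setUP; right; apply/SthetaP => //.
    by exists s => //; rewrite s0 (eqP Hm) Nm1_odd // mulN1r opprK eqxx.
  by apply/setUP; right; apply/bigSP; exists s; rewrite ?s0.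
case/setUP => [/setUP[/set2P[->|->]|]|].
- by apply/PrFig_canon; apply: Or31.
- by apply/PrFig_canon; apply: Or32.
- case/(SthetaP _ n1) => s /andP[s0 /eqP Ns] ->; apply/PrFig_canon; apply: Or33.
  exists s => //; rewrite s0 good_odd //; apply/orP; left.
  by move: Ns; rewrite Nm1_odd // mulrN1 => <-; rewrite opprK.
case/bigSP => s /andP[s0 Hs] ->; apply/PrFig_canon; apply: Or33.
by exists s => //; rewrite s0 good_odd // Hs orbT.
Qed.


Definition U := [set c : F | (c ^+ q == c) && (c != 0)].
Definition fib (c : F) := [set s : F | Nrm q s == c].

Lemma fixpt_pow (c : F) : c ^+ q = c -> c != 0 -> c ^+ q.-1 = 1.
Proof.
move=> cq c0; apply: (mulIf c0); rewrite -exprSr prednK ?cq ?mul1r //.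
Qed.

Lemma roots_pow_le (k : nat) (c : F) (A : {set F}) : (0 < k)%N ->
  (forall x, x \in A -> x ^+ k = c) -> (#|A| <= k)%N.
Proof.
move=> k0 HA.
have P0 : ('X^k - c%:P : {poly F}) != 0 by rewrite -size_poly_eq0 size_XnsubC.
have := card_roots_lt P0; rewrite size_XnsubC // ltnS => H.
apply: leq_trans H; apply: subset_leq_card; apply/subsetP => x xA.
by rewrite inE /root !hornerE HA // subrr.
Qed.

Lemma U_le : (#|U| <= q.-1)%N.
Proof.
apply: (roots_pow_le (c := 1)); first by move: q_gt1; lia.
by move=> x; rewrite inE => /andP[/eqP xq x0]; rewrite fixpt_pow.
Qed.

Lemma fib_le (c : F) : (#|fib c| <= q ^ 2 + q + 1)%N.
Proof.
apply: (roots_pow_le (c := c)); first by rewrite addn1.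
by move=> x; rewrite inE => /eqP.
Qed.

Lemma NU (s : F) : s \in [set s : F | s != 0] -> Nrm q s \in U.
Proof. by rewrite !inE => s0; rewrite Nfix eqxx N_eq0. Qed.

Lemma card_nz : #|[set s : F | s != 0]| = (q ^ 3).-1.
Proof.
rewrite -cardF -(cardsC1 0); apply: eq_card => x; by rewrite !inE.
Qed.

Lemma cube_eq : ((q ^ 3).-1 = q.-1 * (q ^ 2 + q + 1))%N.
Proof.
have -> : (q ^ 3 = q * q * q)%N by rewrite !expnS expn0 muln1 mulnA.
have -> : (q ^ 2 = q * q)%N by rewrite !expnS expn0 muln1.
move: q_gt1; nia.
Qed.

Lemma U_fib : #|U| = q.-1 /\ forall c, c \in U -> #|fib c| = (q ^ 2 + q + 1)%N.
Proof.
have H := card_part NU.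
have E : forall c, c \in U ->
    [set x in [set s : F | s != 0] | Nrm q x == c] = fib c.
  move=> c; rewrite inE => /andP[_ c0]; apply/setP => x; rewrite !inE.
  apply/andP/idP => [[]//|Hc]; split => //.
  by apply: contraNneq c0 => x0; rewrite -(eqP Hc) x0 N0.
rewrite (eq_bigr (fun c => #|fib c|)) in H; last by move=> c cU; rewrite E.
rewrite card_nz cube_eq in H.
have Hle : (\sum_(c in U) #|fib c| <= #|U| * (q ^ 2 + q + 1))%N.
  by rewrite -sum_nat_const; apply: leq_sum => c _; apply: fib_le.
have n0 : (0 < q ^ 2 + q + 1)%N by rewrite addn1.
have UE : #|U| = q.-1.
  apply/eqP; rewrite eqn_leq U_le /=.
  by rewrite -(leq_pmul2r n0) H.
split => //; apply: sum_eq_max; first by move=> c _; apply: fib_le.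
by rewrite UE H.
Qed.


Section Odd.
Hypothesis oq : odd q.
Hypothesis m1 : (-1 : F) != 1.

Definition Sq := [set a : F | nzsqFq q a].

Lemma frN (x : F) : (- x) ^+ q = - x ^+ q.
Proof. by rewrite exprNn -signr_odd oq expr1 mulN1r. Qed.

Lemma Sq_card : (#|Sq| * 2 = q.-1)%N.
Proof.
have fU : forall u, u \in U -> u ^+ 2 \in Sq.
  move=> u; rewrite !inE => /andP[uq u0]; apply/existsP; exists u.
  by rewrite uq u0 eqxx.
have H := card_part fU; rewrite (proj1 U_fib) in H.
rewrite H -sum_nat_const; apply: eq_bigr => a; rewrite inE.
case/existsP => u0 /and3P[/eqP u0q u00 /eqP ->].
have -> : [set x in U | x ^+ 2 == u0 ^+ 2] = [set u0; - u0].
  apply/setP => x; rewrite !inE; apply/idP/idP.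
    case/andP => _; rewrite -subr_eq0 subr_sqr mulf_eq0 subr_eq0 addr_eq0.
    done.
  case/orP => /eqP ->; rewrite ?frN u0q ?sqrrN !eqxx ?oppr_eq0 u00 //.
rewrite cards2.
have -> : (u0 != - u0) by apply: contra m1 => /eqP E; apply/eqP; apply: (mulfI u00); rewrite mulrN1 mulr1 -E.
done.
Qed.

Lemma m1_sq : nzsqFq q (-1 : F) = (q %% 4 == 1)%N.
Proof.
have hq := divn_eq q 4; set m := (q %/ 4)%N in hq.
have r4 : (q %% 4 < 4)%N by rewrite ltn_mod.
have r2 : (q %% 4 %% 2 = 1)%N by rewrite modn_dvdm // modn2 oq.
apply/idP/idP.
  case/existsP => s /and3P[/eqP sq s0 /eqP sm]; apply: contraT => r1.
  have r3 : (q %% 4 = 3)%N by move: r4 r2 r1; lia.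
  have := fixpt_pow sq s0.
  have -> : (q.-1 = 2 * (2 * m + 1))%N by move: hq r3; lia.
  rewrite exprM -sm -signr_odd oddD oddM /= expr1.
  by move/eqP; rewrite (negbTE m1).
move=> /eqP r1.
have qm : (q.-1 = 4 * m)%N by move: hq r1; lia.
have m0 : (0 < m)%N by move: hq r1 q_gt1; lia.
have [y yU yn] : exists2 y, y \in U & y ^+ (2 * m) != 1.
  case: (pickP [pred y | (y \in U) && (y ^+ (2 * m) != 1)]) => [y /andP[yU yn]|H].
    by exists y.
  have : (#|U| <= 2 * m)%N.
    apply: (roots_pow_le (c := 1)); first by move: m0; lia.
    by move=> x xU; move: (H x) => /=; rewrite xU /= => /negbFE/eqP.
  by rewrite (proj1 U_fib) qm; move: m0; lia.
move: yU; rewrite inE => /andP[/eqP yq y0].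
have y4 : y ^+ (4 * m) = 1 by rewrite -qm fixpt_pow.
have z2 : (y ^+ (2 * m)) ^+ 2 = 1 by rewrite -exprM mulnC mulnA y4.
have zm : y ^+ (2 * m) = -1.
  have : (y ^+ (2 * m) - 1) * (y ^+ (2 * m) + 1) = 0 by rewrite -subr_sqr expr1n z2 subrr.
  move/eqP; rewrite mulf_eq0 subr_eq0 (negbTE yn) /=.
  by rewrite addr_eq0 => /eqP.
apply/existsP; exists (y ^+ m).
rewrite exprAC yq eqxx expf_neq0 //= -exprM mulnC zm eqxx.
done.
Qed.


Definition Gs := [set s : F | (s != 0) && good s].
Definition Good := [set c : F | (c == -1) || nzsqFq q c].

Lemma Pr_decomp : Pr (Fig q (T F)) = pclass ((1, 0, 0) : vec F) |:
  (pclass ((0, 1, 0) : vec F) |: [set pclass ((1, s, 0) : vec F) | s in Gs]).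
Proof.
apply/setP => Q; rewrite !in_setU1; apply/idP/idP.
  case/PrFig_canon => [->|->|[s Hs ->]]; rewrite ?eqxx ?orbT //.
  by apply/orP; right; apply/orP; right; apply/imsetP; exists s; rewrite ?inE.
case/orP => [/eqP ->|/orP[/eqP ->|/imsetP[s Hs ->]]]; apply/PrFig_canon.
- exact: Or31.
- exact: Or32.
by apply: Or33; exists s; rewrite inE in Hs.
Qed.

Lemma vnz1s (s : F) : vnz ((1, s, 0) : vec F).
Proof. by rewrite vnzE oner_eq0. Qed.

Lemma card_Gs : #|Gs| = (#|Good| * (q ^ 2 + q + 1))%N.
Proof.
have -> : #|Gs| = #|[set s : F | Nrm q s \in Good]|.
  apply: eq_card => s; rewrite !inE.
  have [->|s0] := eqVneq s 0.
    rewrite N0 /= eq_sym oppr_eq0 oner_eq0 /=; apply/esym/negbTE.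
    by apply/existsP => -[u /and3P[_ u0 /eqP E]]; move/esym/eqP: E; rewrite expf_eq0 /= (negbTE u0).
  by rewrite /= good_odd.
have fG : forall s, s \in [set s : F | Nrm q s \in Good] -> Nrm q s \in Good.
  by move=> s; rewrite inE.
rewrite (card_part fG) -sum_nat_const; apply: eq_bigr => c cG.
have cU : c \in U.
  move: cG; rewrite !inE => /orP[/eqP ->|].
    by rewrite frN expr1n eqxx oppr_eq0 oner_eq0.
  by case/existsP => u /and3P[/eqP uq u0 /eqP ->]; rewrite -exprAC uq eqxx expf_neq0.
rewrite -((proj2 U_fib) c cU); apply: eq_card => s; rewrite !inE.
apply/andP/idP => [[]//|/eqP E]; split => //; rewrite E.
  rewrite inE in cG; first exact: cG.
exact: eqxx.
Qed.

Lemma card_Good : #|Good| = ((((-1)%R : F) \notin Sq) + #|Sq|)%N.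
Proof.
rewrite -cardsU1; apply: eq_card => c; rewrite !inE; done.
Qed.

Lemma odd_card : #|Pr (Fig q (T F))| =
  (if q %% 4 == 1 then 2 + (q - 1) %/ 2 * (q ^ 2 + q + 1)
   else 2 + (q + 1) %/ 2 * (q ^ 2 + q + 1))%N.
Proof.
rewrite Pr_decomp !cardsU1.
have inj : {in Gs &, injective (fun s : F => pclass ((1, s, 0) : vec F))}.
  move=> s s' _ _ /(pclass_inv (vnz1s s))[c _]; rewrite vscaleE mulr1 mulr0.
  by case=> c1 ->; rewrite -c1 mul1r.
rewrite (card_in_imset inj) card_Gs card_Good.
have -> : (pclass ((0, 1, 0) : vec F) \notin [set pclass ((1, s, 0) : vec F) | s in Gs]).
  apply/imsetP => -[s _ /(pclass_inv vnz010)[c _ E]].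
  by move: E; rewrite vscaleE mulr1 mulr0 => -[c0 e]; move: e; rewrite -c0 mul0r => /eqP; rewrite oner_eq0.
have -> : (pclass ((1, 0, 0) : vec F) \notin pclass ((0, 1, 0) : vec F) |:
   [set pclass ((1, s, 0) : vec F) | s in Gs]).
  rewrite in_setU1 negb_or; apply/andP; split.
    apply/eqP => /(pclass_inv vnz100)[c _]; rewrite vscaleE !mulr0 mulr1 => -[e _].
    by move/eqP: e; rewrite oner_eq0.
  apply/imsetP => -[s]; rewrite inE => /andP[s0 _] /(pclass_inv vnz100)[c _ E].
  move: E; rewrite vscaleE mulr1 mulr0 => -[c1 e]; move: e; rewrite -c1 mul1r => e.
  by move: s0; rewrite -e eqxx.
have S2 := Sq_card; rewrite inE m1_sq.
set n := (q ^ 2 + q + 1)%N.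
case: ifP => r1 /=.
  have -> : ((q - 1) %/ 2 = #|Sq|)%N by move: S2; lia.
  by rewrite add0n.
have -> : ((q + 1) %/ 2 = 1 + #|Sq|)%N by move: S2 q_gt1; lia.
done.
Qed.

End Odd.
End Frob.

Unset Implicit Arguments.

Theorem theorem6p1 (F : finFieldType) (q : nat) :
  (exists p k : nat, [/\ prime p, (0 < k)%N & q = (p ^ k)%N]) ->
  #|F| = (q ^ 3)%N ->
  (~~ odd q -> Pr (Fig q (T F)) = [set P in points F | inc P (mT F)]) /\
  (odd q ->
     Pr (Fig q (T F)) =
       [set pclass ((1, 0, 0) : vec F); pclass ((0, 1, 0) : vec F)]
         :|: Stheta q (-1) :|: bigS F q
     /\ #|Pr (Fig q (T F))| =
          (if q %% 4 == 1 then 2 + (q - 1) %/ 2 * (q ^ 2 + q + 1)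
           else 2 + (q + 1) %/ 2 * (q ^ 2 + q + 1))%N).
Proof.
case=> p [k [pp k0 qe]] cardF.
have p1 : (1 < p)%N by apply: prime_gt1.
have q_gt1 : (1 < q)%N.
  rewrite qe; apply: (leq_trans p1); rewrite -{1}(expn1 p).
  by rewrite leq_pexp2l // ltnW.
have q_gt0 : (0 < q)%N by apply: ltn_trans q_gt1.
have HF3 : forall x : F, x ^+ q ^+ q ^+ q = x.
  move=> x; rewrite -!exprM.
  have E : (q ^ 3 = q * q * q)%N by rewrite !expnS expn0 muln1 mulnA.
  by rewrite mulnA -E -cardF expf_card.
have pc : p \in [pchar F].
  apply: (@card_finPcharP _ p (k * 3)) => //.
  by rewrite cardF qe expnM.
have HD : forall x y : F, (x + y) ^+ q = x ^+ q + y ^+ q.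
  move=> x y; apply: exprDn_pchar.
  by rewrite qe pnatX (pnatE _ pp) pc.
split; first exact: even_eq.
move=> oq.
have m1 : (-1 : F) != 1.
  apply/eqP => E.
  have : (p %| 2)%N.
    rewrite (dvdn_pcharf pc); apply/eqP.
    have -> : (2%:R : F) = 1 + 1 by [].
    by rewrite -{1}E addNr.
  move/(dvdn_leq (isT : (0 < 2)%N)) => p2.
  have pe : p = 2%N by move: p1 p2; lia.
  by move: oq; rewrite qe oddX pe /= orbF; case: (k) k0.
split; first exact: odd_eq.
exact: odd_card.
Qed.
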